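(* Let $R$ be a ring with unit. Let $\mathcal{Z} = (Z^-\xrightarrow{\zeta^-}Z\xleftarrow{\zeta^+}Z^+)$ and $\mathcal{Y}=(Y^-\xrightarrow{\upsilon^-}Y\xleftarrow{\upsilon^+}Y^+)$ be sheaves on $\mathbb{P}^1$ over $R$, and let $f\colon Z\to Y$ be a homomorphism of $R[x,x^{-1}]$-modules. Suppose that $Z^-$ is finitely generated over $R[x^{-1}]$ and $Z^+$ is finitely generated over $R[x]$, and that $\upsilon^-$ and $\upsilon^+$ are injective. Then there exist integers $k,\ell\geq 0$, an $R[x^{-1}]$-linear map $f^-\colon Z^-\to Y^-$ and an $R[x]$-linear map $f^+\colon Z^+\to Y^+$ such that $f\circ\zeta^- = x^k\upsilon^-\circ f^-$ and $f\circ\zeta^+ = x^{-\ell}\upsilon^+\circ f^+$. In particular $(f^-,f,f^+)$ is a morphism of sheaves from $\mathcal{Z}$ to the twist $\mathcal{Y}(k+\ell) = (Y^-\xrightarrow{x^k\upsilon^-}Y\xleftarrow{x^{-\ell}\upsilon^+}Y^+)$.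
   Context: Modules are right modules. A sheaf on $\mathbb{P}^1$ over $R$ is a diagram $M^- \xrightarrow{\mu^-} M \xleftarrow{\mu^+} M^+$ where $M^-$ is an $R[x^{-1}]$-module, $M$ an $R[x,x^{-1}]$-module, $M^+$ an $R[x]$-module, $\mu^-$ is $R[x^{-1}]$-linear, $\mu^+$ is $R[x]$-linear, and the adjoint maps $M^-\otimes_{R[x^{-1}]}R[x,x^{-1}]\to M$ and $M^+\otimes_{R[x]}R[x,x^{-1}]\to M$ are isomorphisms; morphisms of sheaves are triples of linear maps compatible with the structure maps. For a sheaf $\mathcal{M}$ and integer $n$, a twist $\mathcal{M}(n)$ is any sheaf $M^-\xrightarrow{x^k\mu^-}M\xleftarrow{x^{-\ell}\mu^+}M^+$ with $k+\ell=n$. *)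

(* Defs.v *)
From HB Require Import structures.
From mathcomp Require Import all_boot all_order all_algebra.
Set Implicit Arguments. Unset Strict Implicit. Unset Printing Implicit Defensive.
Import GRing.Theory.
Local Open Scope ring_scope.

(* Conventions:
   - a right R-module is a left R^c-module ([lmodType R^c]);
   - an R[x]-module is a right R-module with an R-linear endomorphism (action
     of x); an R[x^-1]-module is a right R-module with an R-linear
     endomorphism (action of x^-1); an R[x,x^-1]-module is a right R-module
     with an R-linear automorphism (action of x, with inverse the action of
     x^-1).  Since x is central, these are exactly the module structures. *)

(* M is finitely generated as a module over R[t], t acting by [t]:
   there are finitely many generators g_i such that every element is
   sum_i g_i * p_i(t) = sum_i sum_j (t^j g_i) * c_ij. *)
Definition fin_gen (R : pzRingType) (M : lmodType R^c) (t : {linear M -> M}) :=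
  exists (n : nat) (g : 'I_n -> M),
    forall m : M, exists (N : nat) (c : 'I_n -> 'I_N -> R^c),
      m = \sum_(i < n) \sum_(j < N) c i j *: iter j t (g i).

Record sheafP1 (R : pzRingType) := SheafP1 {
  Mm : lmodType R^c;
  M0 : lmodType R^c;
  Mp : lmodType R^c;
  xinv_m : {linear Mm -> Mm};
  x_0    : {linear M0 -> M0};
  xinv_0 : {linear M0 -> M0};
  x_p    : {linear Mp -> Mp};
  mu_m : {linear Mm -> M0};
  mu_p : {linear Mp -> M0};
  x_0K : cancel x_0 xinv_0;
  xinv_0K : cancel xinv_0 x_0;
  mu_m_lin : forall m, mu_m (xinv_m m) = xinv_0 (mu_m m);
  mu_p_lin : forall m, mu_p (x_p m) = x_0 (mu_p m);
  (* M^- (x) R[x,x^-1] -> M is an isomorphism; M^- (x) R[x,x^-1] is the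
     localization of M^- at the central element x^-1, so this says:
     kernel of mu^- = x^-1-torsion, and M = union of x^n mu^-(M^-). *)
  mu_m_ker : forall m, mu_m m = 0 <-> exists n, iter n xinv_m m = 0;
  mu_m_surj : forall y : M0, exists (n : nat) (m : Mm), y = iter n x_0 (mu_m m);
  mu_p_ker : forall m, mu_p m = 0 <-> exists n, iter n x_p m = 0;
  mu_p_surj : forall y : M0, exists (n : nat) (m : Mp), y = iter n xinv_0 (mu_p m)
}.

(* Main.v *)
From HB Require Import structures.
From mathcomp Require Import all_boot all_order all_algebra.
From Stdlib Require Import ClassicalEpsilon.
From Stdlib Require Import ClassicalEpsilon.
Require Import Defs.
Import GRing.Theory.
Local Open Scope ring_scope.
Definition mkLin (R : pzRingType) (A B : lmodType R^c) (g : A -> B) (H : linear g)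
  : {linear A -> B} := HB.pack g (GRing.isLinear.Build _ _ _ _ g H).
Arguments mkLin {R A B g}.

Lemma iter_comm (T U : Type) (m : T -> U) (t : T -> T) (s : U -> U) :
  (forall a, m (t a) = s (m a)) -> forall k a, m (iter k t a) = iter k s (m a).
Proof. by move=> H; elim=> [//|k IH] a /=; rewrite H IH. Qed.
Arguments iter_comm {T U m t s}.

Lemma iter_lin (R : pzRingType) (W : lmodType R^c) (t : {linear W -> W}) k :
  linear (iter k t).
Proof. by elim: k => [//|k IH] a u v /=; rewrite IH linearP. Qed.

Lemma iter_sum (R : pzRingType) (W : lmodType R^c) (t : {linear W -> W}) k
  (I : Type) (r : seq I) (F : I -> W) :
  iter k t (\sum_(i <- r) F i) = \sum_(i <- r) iter k t (F i).
Proof. by elim: k => [//|k IH] /=; rewrite IH linear_sum. Qed.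

Lemma iter_scale (R : pzRingType) (W : lmodType R^c) (t : {linear W -> W}) k c w :
  iter k t (c *: w) = c *: iter k t w.
Proof. by elim: k => [//|k IH] /=; rewrite IH linearZ. Qed.

Lemma iter_canK (T : Type) (t s : T -> T) : cancel t s ->
  forall k w, iter k s (iter k t w) = w.
Proof.
move=> H; elim=> [//|k IH] w; by rewrite iterSr /= H IH.
Qed.

Lemma half (R : pzRingType) (A B V W : lmodType R^c) (tA : {linear A -> A})
  (tB : {linear B -> B}) (tV : {linear V -> V}) (tW sW : {linear W -> W})
  (muA : {linear A -> V}) (muB : {linear B -> W}) (f : {linear V -> W}) :
  cancel sW tW -> cancel tW sW ->
  (forall a, muA (tA a) = tV (muA a)) -> (forall b, muB (tB b) = tW (muB b)) ->
  (forall v, f (tV v) = tW (f v)) -> injective muB -> fin_gen tA ->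
  (forall w, exists n b, w = iter n sW (muB b)) ->
  exists k (fm : {linear A -> B}), (forall a, fm (tA a) = tB (fm a)) /\
    forall a, f (muA a) = iter k sW (muB (fm a)).
Proof.
move=> sK tK hA hB hf inj [n [g hg]] surj.
have [nb hnb] : exists nb : 'I_n -> nat * B, forall i,
    f (muA (g i)) = iter (nb i).1 sW (muB (nb i).2).
  suff HH : forall i, exists p : nat * B, f (muA (g i)) = iter p.1 sW (muB p.2).
    by have [u Hu] := fin_all_exists HH; exists u.
  move=> i; have [m [b ->]] := surj (f (muA (g i))).
  by exists (m, b).
pose k := (\max_(i < n) (nb i).1)%N.
pose b' i := iter (k - (nb i).1)%N tB (nb i).2.
have hb' i : iter k tW (f (muA (g i))) = muB (b' i).
  rewrite hnb /b' (iter_comm hB).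
  have le : ((nb i).1 <= k)%N by apply: (leq_bigmax i).
  rewrite -{1}(subnK le) iterD; congr (iter _ tW _); exact: iter_canK.
pose h a := iter k tW (f (muA a)).
have hlin : linear h by move=> c u v; rewrite /h !linearP iter_lin.
have hex : forall a, exists b, muB b = h a.
  move=> a; have [N [c ->]] := hg a.
  exists (\sum_(i < n) \sum_(j < N) c i j *: iter j tB (b' i)).
  rewrite /h !linear_sum iter_sum; apply: eq_bigr => i _.
  rewrite !linear_sum iter_sum; apply: eq_bigr => j _.
  rewrite !linearZ iter_scale; congr (_ *: _).
  rewrite (iter_comm hA) (iter_comm hf) -iterD addnC iterD.
  rewrite -[RHS]iterD addnC iterD hb' /b' !(iter_comm hB).
  by rewrite -!iterD addnC.
pose fm a := epsilon (inhabits (0 : B)) (fun b => muB b = h a).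
have fmE a : muB (fm a) = h a := epsilon_spec _ _ (hex a).
have fmlin : linear fm.
  by move=> c u v; apply: inj; rewrite linearP !fmE hlin.
exists k, (mkLin fmlin); split => a /=.
  apply: inj; rewrite fmE hB fmE /h hA hf.
  by rewrite -iterSr iterS.
by rewrite fmE /h iter_canK.
Qed.


Theorem mainTheorem6 (R : pzRingType) (Z Y : sheafP1 R)
  (f : {linear M0 Z -> M0 Y})
  (f_lin : forall z, f (x_0 Z z) = x_0 Y (f z))
  (fgm : fin_gen (xinv_m Z)) (fgp : fin_gen (x_p Z))
  (injm : injective (mu_m Y)) (injp : injective (mu_p Y)) :
  exists (k l : nat) (fm : {linear Mm Z -> Mm Y}) (fp : {linear Mp Z -> Mp Y}),
    [/\ forall z, fm (xinv_m Z z) = xinv_m Y (fm z),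
        forall z, fp (x_p Z z) = x_p Y (fp z),
        forall z, f (mu_m Z z) = iter k (x_0 Y) (mu_m Y (fm z))
      & forall z, f (mu_p Z z) = iter l (xinv_0 Y) (mu_p Y (fp z))].
Proof.
have finv : forall v, f (xinv_0 Z v) = xinv_0 Y (f v).
  by move=> v; rewrite -{2}(xinv_0K v) f_lin x_0K.
have [k [fm [h1 h2]]] := @half R (Mm Z) (Mm Y) (M0 Z) (M0 Y) (xinv_m Z)
  (xinv_m Y) (xinv_0 Z) (xinv_0 Y) (x_0 Y) (mu_m Z) (mu_m Y) f
  (x_0K (s:=Y)) (xinv_0K (s:=Y)) (mu_m_lin (s:=Z))
  (mu_m_lin (s:=Y)) finv injm fgm (mu_m_surj (s:=Y)).
have [l [fp [h3 h4]]] := @half R (Mp Z) (Mp Y) (M0 Z) (M0 Y) (x_p Z)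
  (x_p Y) (x_0 Z) (x_0 Y) (xinv_0 Y) (mu_p Z) (mu_p Y) f
  (xinv_0K (s:=Y)) (x_0K (s:=Y)) (mu_p_lin (s:=Z))
  (mu_p_lin (s:=Y)) f_lin injp fgp (mu_p_surj (s:=Y)).
exists k, l, fm, fp; exact: (And4 h1 h3 h2 h4).
Qed.
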